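(* Let $S,T$ be numberings of shape $\lambda\vdash n$, let $1\le i\le \ell(\lambda)-1$, and let $Q$ be a nonempty subset of the entries in row $i+1$ of $S$. Define \[ \gamma_Q^T(S)=\sum_{U\in \Xi_{i,Q}(S)}\sigma_{U,T}\,a_U\in \widetilde{\mathcal M}^T . \] Then $\gamma_Q^T(S)\in\ker\Psi^T$.
   Context: Permutations in $\mathfrak S_n$ act on $[n]$, products are compositions $(\sigma\tau)(k)=\sigma(\tau(k))$. A numbering of shape $\lambda\vdash n$ is a filling of the Young diagram of $\lambda$ (rows indexed top to bottom; $\ell(\lambda)$ = number of rows) with $1,\dots,n$, each exactly once. For $\pi\in\mathfrak S_n$, $\pi\cdot T$ replaces each entry $k$ by $\pi(k)$; $\sigma_{T,S}$ is the unique permutation with $\sigma_{T,S}\cdot T=S$. $R(T)$, $C(T)$ are the row and column groups; $a_T=\sum_{\rho\in R(T)}\rho$, $b_T=\sum_{\zeta\in C(T)}\operatorname{sgn}(\zeta)\zeta$. Let $\widetilde{\mathcal M}^T=a_T\,\mathbb C[\mathfrak S_n]$ be the right $\mathbb C[\mathfrak S_n]$-submodule generated by $a_T$ (note $\sigma_{U,T}a_U=a_T\sigma_{U,T}\in\widetilde{\mathcal M}^T$), and let $\Psi^T:\widetilde{\mathcal M}^T\to\mathbb C[\mathfrak S_n]$ be the right-module homomorphism $a_Tx\mapsto b_Ta_Tx$. The set $\Xi_{i,Q}(S)$ consists of the numberings obtained from $S$ as follows, one for each pair $(A,B)$ with $A\subseteq Q$, $B$ a subset of the entries of row $i$ of $S$,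 and $|A|=|B|$ (possibly $A=B=\emptyset$): the entries of $A$ are moved to the positions of row $i$ previously occupied by $B$, and the entries of $B$ to the positions of row $i+1$ previously occupied by $A$, preserving relative order (the $k$-th leftmost element of $A$ goes to the position of the $k$-th leftmost element of $B$ and vice versa). *)

(* Defs.v *)
From HB Require Import structures.
From mathcomp Require Import all_boot all_order all_algebra all_fingroup all_field.
Set Implicit Arguments. Unset Strict Implicit. Unset Printing Implicit Defensive.
Import GRing.Theory Num.Theory.
Local Open Scope ring_scope.

(* Entries of a numbering are 'I_n = {0,..,n-1} (paper: 1..n, shifted by one).
   Rows and columns are 0-indexed (paper: rows 1..l(lambda)).
   A numbering T is represented by the position map T : 'I_n -> nat * nat,
   sending an entry k to its cell (row, column). *)

Definition is_partition (n : nat) (lam : seq nat) : bool :=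
  [&& sorted geq lam, all (fun p => 0 < p)%N lam & sumn lam == n].

Definition in_shape (lam : seq nat) (c : nat * nat) : bool :=
  (c.1 < size lam)%N && (c.2 < nth 0%N lam c.1)%N.

Definition numbering (n : nat) (lam : seq nat) (T : 'I_n -> nat * nat) : Prop :=
  (forall k, in_shape lam (T k)) /\ injective T.

(* The group algebra C[S_n], C realized as algC; elements are coefficient
   functions. Paper composition: (pcomp s t) k = s (t k). *)
Definition galg (n : nat) := {ffun 'S_n -> algC}.

Definition pcomp n (s t : 'S_n) : 'S_n := (t * s)%g.

Definition gmul n (f g : galg n) : galg n :=
  [ffun p => \sum_(s : 'S_n) \sum_(t : 'S_n) ((pcomp s t == p)%:R * f s * g t)].

Definition gdelta n (s : 'S_n) : galg n := [ffun p => (p == s)%:R].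

Definition sigmaTS n (T S : 'I_n -> nat * nat) : 'S_n :=
  odflt 1%g [pick s : 'S_n | [forall k, S (s k) == T k]].

Definition row_group n (T : 'I_n -> nat * nat) : pred 'S_n :=
  fun r => [forall k, (T (r k)).1 == (T k).1].
Definition col_group n (T : 'I_n -> nat * nat) : pred 'S_n :=
  fun z => [forall k, (T (z k)).2 == (T k).2].

Definition aT n (T : 'I_n -> nat * nat) : galg n :=
  [ffun p => (row_group T p)%:R].
Definition bT n (T : 'I_n -> nat * nat) : galg n :=
  [ffun p => if col_group T p then (-1) ^+ odd_perm p else 0].

Definition row_entries n (S : 'I_n -> nat * nat) (r : nat) : {set 'I_n} :=
  [set k | (S k).1 == r].

Definition by_col n (S : 'I_n -> nat * nat) (X : {set 'I_n}) : seq 'I_n :=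
  sort (fun x y => ((S x).2 <= (S y).2)%N) (enum X).

(* The numbering of Xi_{i,Q}(S) attached to (A,B): the k-th leftmost element of A
   goes to the position of the k-th leftmost element of B and vice versa. *)
Definition xi_move n (S : 'I_n -> nat * nat) (A B : {set 'I_n}) : 'I_n -> nat * nat :=
  fun k =>
    if k \in A then S (nth k (by_col S B) (index k (by_col S A)))
    else if k \in B then S (nth k (by_col S A) (index k (by_col S B)))
    else S k.

Definition gammaQ n (T S : 'I_n -> nat * nat) (i : nat) (Q : {set 'I_n}) : galg n :=
  \sum_(AB : {set 'I_n} * {set 'I_n} |
          [&& AB.1 \subset Q, AB.2 \subset row_entries S i & #|AB.1| == #|AB.2|])
    gmul (gdelta (sigmaTS (xi_move S AB.1 AB.2) T)) (aT (xi_move S AB.1 AB.2)).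

(* Main.v *)
Require Import Defs.
From HB Require Import structures.
From mathcomp Require Import all_boot all_order all_algebra all_fingroup all_field.
Set Implicit Arguments. Unset Strict Implicit. Unset Printing Implicit Defensive.
Import GRing.Theory Num.Theory.
Local Open Scope ring_scope.

Section Alg.
Variable n : nat.
Implicit Types (f g h : galg n) (s t p : 'S_n).

Lemma gmulE f g p : gmul f g p = \sum_t f (t^-1 * p)%g * g t.
Proof.
rewrite ffunE exchange_big /=; apply: eq_bigr => t _.
rewrite (bigD1 (t^-1 * p)%g) //= /Defs.pcomp mulKVg eqxx mul1r big1 ?addr0 // => s Hs.
case: eqP => [E|]; last by rewrite !mul0r.
by case/eqP: Hs; rewrite -E mulKg.
Qed.

Lemma gmulA f g h : gmul (gmul f g) h = gmul f (gmul g h).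
Proof.
apply/ffunP => p; rewrite !gmulE.
under eq_bigr do rewrite gmulE mulr_suml.
under [RHS]eq_bigr do rewrite gmulE mulr_sumr.
rewrite [RHS]exchange_big /=; apply: eq_bigr => u _.
rewrite [RHS](reindex_inj (mulgI u)) /=; apply: eq_bigr => v _.
by rewrite invMg mulKg mulgA mulrA.
Qed.

Lemma gmulDr f g h : gmul f (g + h) = gmul f g + gmul f h.
Proof. apply/ffunP => p; rewrite gmulE [RHS]ffunE !gmulE -big_split; apply: eq_bigr => t _; by rewrite ffunE mulrDr. Qed.
Lemma gmulDl f g h : gmul (g + h) f = gmul g f + gmul h f.
Proof. apply/ffunP => p; rewrite gmulE [RHS]ffunE !gmulE -big_split; apply: eq_bigr => t _; by rewrite ffunE mulrDl. Qed.
Lemma gmul0r f : gmul 0 f = 0.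
Proof. apply/ffunP => p; rewrite gmulE [RHS]ffunE big1 // => t _; by rewrite ffunE mul0r. Qed.
Lemma gmulr0 f : gmul f 0 = 0.
Proof. apply/ffunP => p; rewrite gmulE [RHS]ffunE big1 // => t _; by rewrite ffunE mulr0. Qed.

Lemma gmul_sumr (I : Type) (r : seq I) (P : pred I) (F : I -> galg n) f :
  gmul f (\sum_(i <- r | P i) F i) = \sum_(i <- r | P i) gmul f (F i).
Proof. by apply: (big_morph (gmul f)); [apply: gmulDr | apply: gmulr0]. Qed.
Lemma gmul_suml (I : Type) (r : seq I) (P : pred I) (F : I -> galg n) f :
  gmul (\sum_(i <- r | P i) F i) f = \sum_(i <- r | P i) gmul (F i) f.
Proof. by apply: (big_morph (fun x : galg n => gmul x f)); [move=> x y; apply: gmulDl | apply: gmul0r]. Qed.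

Lemma gmulMnl f g m : gmul (f *+ m) g = gmul f g *+ m.
Proof. by elim: m => [|m IH]; rewrite ?mulr0n ?gmul0r // !mulrS gmulDl IH. Qed.
Lemma gmulMnr f g m : gmul f (g *+ m) = gmul f g *+ m.
Proof. by elim: m => [|m IH]; rewrite ?mulr0n ?gmulr0 // !mulrS gmulDr IH. Qed.

Lemma gmul_deltal s f p : gmul (gdelta s) f p = f (p * s^-1)%g.
Proof.
rewrite gmulE (bigD1 (p * s^-1)%g) //= ffunE invMg invgK -mulgA mulVg mulg1 eqxx mul1r.
rewrite big1 ?addr0 // => t Ht; rewrite ffunE.
case: eqP => [E|]; last by rewrite mul0r.
by case/eqP: Ht; rewrite -[p](mulKVg t) E mulgK.
Qed.

Lemma gmul_deltar s f p : gmul f (gdelta s) p = f (s^-1 * p)%g.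
Proof.
rewrite gmulE (bigD1 s) //= ffunE eqxx mulr1 big1 ?addr0 // => t Ht.
by rewrite ffunE (negbTE Ht) mulr0.
Qed.

Lemma gmul_delta s t : gmul (gdelta s) (gdelta t) = gdelta (t * s)%g.
Proof.
apply/ffunP => p; rewrite gmul_deltal !ffunE.
suff -> : (p * s^-1 == t)%g = (p == t * s)%g by [].
by apply/eqP/eqP => [<-|->]; rewrite ?mulgK // mulgKV.
Qed.

Lemma gmul_conj s f g : (forall r, f r = g (r ^ s)%g) ->
  gmul (gdelta s) f = gmul g (gdelta s).
Proof.
move=> H; apply/ffunP => p; rewrite gmul_deltal gmul_deltar H.
by rewrite /conjg !mulgA mulgKV.
Qed.

End Alg.


Lemma numbering_onto n lam (T : 'I_n -> nat * nat) :
  is_partition n lam -> numbering lam T ->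
  forall c, in_shape lam c -> exists k, T k = c.
Proof.
case/and3P => _ _ /eqP Hsum [Hsh Hinj] c Hc.
pose cells := [seq (r, j) | r <- iota 0 (size lam), j <- iota 0 (nth 0%N lam r)].
have Hu : uniq (map T (enum 'I_n)) by rewrite map_inj_uniq ?enum_uniq.
have Hsub : {subset map T (enum 'I_n) <= cells}.
  move=> x /mapP [k _ ->]; case/andP: (Hsh k) => H1 H2.
  apply/allpairsPdep; exists (T k).1, (T k).2; split; rewrite ?mem_iota //.
  by case: (T k).
have Hsz : (size cells <= size (map T (enum 'I_n)))%N.
  rewrite size_allpairs_dep size_map size_enum_ord -Hsum.
  rewrite (_ : [seq size (iota 0 (nth 0%N lam x)) | x <- iota 0 (size lam)] = lam) //.
  rewrite -[in RHS](mkseq_nth 0%N lam) /mkseq; apply: eq_map => x /=; by rewrite size_iota.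
have [_ Heq] := uniq_min_size Hu Hsub Hsz.
have : c \in cells.
  case/andP: Hc => H1 H2; apply/allpairsPdep; exists c.1, c.2; split; rewrite ?mem_iota //.
  by case: c H1 H2.
by rewrite -Heq => /mapP [k _ ->]; exists k.
Qed.

Lemma sigma_spec n lam (U T : 'I_n -> nat * nat) :
  is_partition n lam -> numbering lam T ->
  (forall k, in_shape lam (U k)) -> injective U ->
  forall k, T (sigmaTS U T k) = U k.
Proof.
move=> Hp HT HU Ui.
have Hex : forall k, exists k', T k' = U k by move=> k; apply: numbering_onto (HU k).
pose f k := odflt k [pick k' | T k' == U k].
have Hf : forall k, T (f k) = U k.
  move=> k; rewrite /f; case: pickP => [k' /eqP //|H].
  by case: (Hex k) => k' E; move: (H k'); rewrite E eqxx.
have finj : injective f by move=> a b E; apply: Ui; rewrite -!Hf E.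
rewrite /sigmaTS; case: pickP => [s /forallP H k|H k]; first by apply/eqP.
by move: (H (perm finj)) => /forallP []; move=> k'; rewrite permE Hf.
Qed.

Lemma aT_conj n (U T : 'I_n -> nat * nat) (s : 'S_n) :
  (forall k, U k = T (s k)) -> forall r, aT U r = aT T (r ^ s)%g.
Proof.
move=> E r; rewrite !ffunE; congr ((nat_of_bool _)%:R); rewrite /row_group.
apply/forallP/forallP => H m; last first.
  by rewrite !E -permJ; apply: H.
by rewrite -(permKV s m) permJ -!E; apply: H.
Qed.

Lemma bT_conj n (U T : 'I_n -> nat * nat) (s : 'S_n) :
  (forall k, U k = T (s k)) -> forall r, bT U r = bT T (r ^ s)%g.
Proof.
move=> E r; rewrite !ffunE odd_permJ.
suff -> : col_group U r = col_group T (r ^ s)%g by [].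
rewrite /col_group; apply/forallP/forallP => H m; last first.
  by rewrite !E -permJ; apply: H.
by rewrite -(permKV s m) permJ -!E; apply: H.
Qed.


Definition piAB n (S : 'I_n -> nat * nat) (A B : {set 'I_n}) (k : 'I_n) : 'I_n :=
  if k \in A then nth k (by_col S B) (index k (by_col S A))
  else if k \in B then nth k (by_col S A) (index k (by_col S B)) else k.

Definition piperm n (S : 'I_n -> nat * nat) (A B : {set 'I_n}) : 'S_n :=
  odflt 1%g [pick s : 'S_n | [forall k, s k == piAB S A B k]].

Lemma xi_moveE n (S : 'I_n -> nat * nat) A B k : xi_move S A B k = S (piAB S A B k).
Proof. by rewrite /xi_move /piAB; case: ifP => //; case: ifP. Qed.

Lemma by_colP n (S : 'I_n -> nat * nat) X :
  [/\ uniq (by_col S X), by_col S X =i X & size (by_col S X) = #|X|].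
Proof.
have P : perm_eq (by_col S X) (enum X) by rewrite /by_col perm_sort perm_refl.
split; first by rewrite (perm_uniq P) enum_uniq.
  by move=> x; rewrite (perm_mem P) mem_enum.
by rewrite (perm_size P) cardE.
Qed.

Lemma swap_step n (sA sB : seq 'I_n) k : uniq sB -> size sA = size sB -> k \in sA ->
  nth k sB (index k sA) \in sB /\ nth (nth k sB (index k sA)) sA
     (index (nth k sB (index k sA)) sB) = k.
Proof.
move=> uB Es kA; have Hi : (index k sA < size sB)%N by rewrite -Es index_mem.
split; first by rewrite mem_nth.
by rewrite index_uniq // nth_index.
Qed.

Lemma piAB_invol n (S : 'I_n -> nat * nat) (A B : {set 'I_n}) :
  (forall k, k \in A -> k \in B = false) -> #|A| = #|B| -> involutive (piAB S A B).
Proof.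
move=> dis cAB k.
have dis' : forall k, k \in B -> k \in A = false.
  by move=> x xB; apply/negP => xA; rewrite (dis x xA) in xB.
have [uA mA sA] := by_colP S A; have [uB mB sB] := by_colP S B.
rewrite {2}/piAB; case: ifP => kA.
  have [H1 H2] := @swap_step n (by_col S A) (by_col S B) k uB
     (etrans sA (etrans cAB (esym sB))) (ltac:(by rewrite mA)).
  rewrite mB in H1; by rewrite /piAB (dis' _ H1) H1.
case: ifP => kB.
  have [H1 H2] := @swap_step n (by_col S B) (by_col S A) k uA
     (etrans sB (etrans (esym cAB) (esym sA))) (ltac:(by rewrite mB)).
  rewrite mA in H1; by rewrite /piAB H1.
by rewrite /piAB kA kB.
Qed.

Lemma pipermE n (S : 'I_n -> nat * nat) (A B : {set 'I_n}) :
  (forall k, k \in A -> k \in B = false) -> #|A| = #|B| -> piperm S A B =1 piAB S A B.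
Proof.
move=> dis cAB; have inj := can_inj (piAB_invol S dis cAB).
rewrite /piperm; case: pickP => [s /forallP H k|H]; first by apply/eqP.
by move: (H (perm inj)) => /forallP []; move=> k'; rewrite permE.
Qed.

Lemma piAB_A n (S : 'I_n -> nat * nat) (A B : {set 'I_n}) k :
  #|A| = #|B| -> k \in A -> piAB S A B k \in B.
Proof.
move=> cAB kA; have [uA mA sA] := by_colP S A; have [uB mB sB] := by_colP S B.
have [H1 _] := @swap_step n (by_col S A) (by_col S B) k uB
     (etrans sA (etrans cAB (esym sB))) (ltac:(by rewrite mA)).
by rewrite /piAB kA -mB.
Qed.

Lemma piAB_B n (S : 'I_n -> nat * nat) (A B : {set 'I_n}) k :
  #|A| = #|B| -> k \notin A -> k \in B -> piAB S A B k \in A.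
Proof.
move=> cAB /negbTE kA kB; have [uA mA sA] := by_colP S A; have [uB mB sB] := by_colP S B.
have [H1 _] := @swap_step n (by_col S B) (by_col S A) k uA
     (etrans sB (etrans (esym cAB) (esym sA))) (ltac:(by rewrite mB)).
by rewrite /piAB kA kB -mA.
Qed.

Lemma piAB_out n (S : 'I_n -> nat * nat) (A B : {set 'I_n}) k :
  k \notin A -> k \notin B -> piAB S A B k = k.
Proof. by move=> /negbTE kA /negbTE kB; rewrite /piAB kA kB. Qed.

Lemma sum_eq1 (T : finType) (P : pred T) (y : T) :
  \sum_(x | P x) ((y == x)%:R : algC) = (P y)%:R.
Proof.
case Py: (P y).
  rewrite (bigD1 y) //= eqxx big1 ?addr0 // => x /andP [_ Hx].
  by rewrite eq_sym (negbTE Hx).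
by rewrite big1 // => x Px; case: eqP => // E; rewrite E Px in Py.
Qed.

Lemma kgM n (F : 'I_n -> nat) (a b : 'S_n) :
  [forall k, F (a k) == F k] -> [forall k, F (b k) == F k] -> [forall k, F ((a * b)%g k) == F k].
Proof.
move=> /forallP Ha /forallP Hb; apply/forallP => k.
by rewrite permM (eqP (Hb _)) (eqP (Ha _)).
Qed.

Lemma kgV n (F : 'I_n -> nat) (a : 'S_n) :
  [forall k, F (a k) == F k] -> [forall k, F (a^-1%g k) == F k].
Proof.
move=> /forallP Ha; apply/forallP => k.
by rewrite -{2}(permKV a k) (eqP (Ha _)).
Qed.

Lemma kg_mulE n (F : 'I_n -> nat) (a p : 'S_n) :
  [forall k, F (a k) == F k] ->
  [forall k, F ((a * p)%g k) == F k] = [forall k, F (p k) == F k].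
Proof.
move=> Ha; apply/idP/idP => H; last exact: kgM.
by rewrite -(mulKg a p); apply: kgM (kgV Ha) H.
Qed.

Lemma gmulNl n (f g : galg n) : gmul (- f) g = - gmul f g.
Proof.
apply/ffunP => p; rewrite gmulE [RHS]ffunE gmulE -sumrN; apply: eq_bigr => t _.
by rewrite ffunE mulNr.
Qed.


Section Gar.
Variables (n : nat) (lam : seq nat) (S : 'I_n -> nat * nat) (i : nat) (Q : {set 'I_n}).
Hypotheses (Hp : is_partition n lam) (HS : numbering lam S) (Hi : (i.+1 < size lam)%N)
  (HQ0 : Q != set0) (HQ : Q \subset row_entries S i.+1).

Local Notation X := (row_entries S i).
Local Notation Y := (X :|: Q).

Definition valid (AB : {set 'I_n} * {set 'I_n}) :=
  [&& AB.1 \subset Q, AB.2 \subset row_entries S i & #|AB.1| == #|AB.2|].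
Definition piQ (AB : {set 'I_n} * {set 'I_n}) := piperm S AB.1 AB.2.

Lemma QnX k : k \in Q -> (k \in X) = false.
Proof.
move=> kQ; move/subsetP: HQ => /(_ k kQ); rewrite !inE => /eqP ->.
by rewrite eqn_leq ltnn.
Qed.

Lemma valid_dis AB : valid AB -> forall k, k \in AB.1 -> k \in AB.2 = false.
Proof.
case/and3P => /subsetP sA /subsetP sB _ k kA; apply/negP => kB.
by have := sB k kB; rewrite QnX ?sA.
Qed.

Lemma valid_card AB : valid AB -> #|AB.1| = #|AB.2|.
Proof. by case/and3P => _ _ /eqP. Qed.

Lemma piQE AB : valid AB -> piQ AB =1 piAB S AB.1 AB.2.
Proof. move=> V; exact: pipermE (valid_dis V) (valid_card V). Qed.

Lemma piQ_invol AB : valid AB -> forall k, piQ AB (piQ AB k) = k.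
Proof. move=> V k; rewrite !piQE //; exact: piAB_invol (valid_dis V) (valid_card V) k. Qed.

Lemma piQ_inv AB : valid AB -> forall k, (piQ AB)^-1%g k = piQ AB k.
Proof. move=> V k; by rewrite -{1}(piQ_invol V k) permK. Qed.

Lemma piQ_X AB : valid AB -> forall m,
  (piQ AB m \in X) = (m \in AB.1) || ((m \in X) && (m \notin AB.2)).
Proof.
move=> V m; have /and3P [/subsetP sA /subsetP sB _] := V.
rewrite piQE //; case mA: (m \in AB.1).
  by apply: sB; apply: piAB_A (valid_card V) mA.
case mB: (m \in AB.2); rewrite ?andbF ?andbT.
  by rewrite QnX // sA // piAB_B ?mA // valid_card.
by rewrite piAB_out ?mA ?mB.
Qed.

Lemma piQ_fix AB : valid AB -> forall m, m \notin Y -> piQ AB m = m.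
Proof.
move=> V m; have /and3P [/subsetP sA /subsetP sB _] := V.
rewrite in_setU negb_or => /andP [mX mQ]; rewrite piQE // piAB_out //.
  by apply/negP => /sA; apply/negP.
by apply/negP => /sB; apply/negP.
Qed.

Definition Gp (g : 'S_n) := [forall k, (k \notin Y) ==> (g k == k)].
Definition Hpred (h : 'S_n) :=
  [forall k, ((k \notin Y) ==> (h k == k)) && ((h k \in X) == (k \in X))].
Definition Hs := [set h : 'S_n | Hpred h].
Definition indG : galg n := [ffun g => (Gp g)%:R].
Definition D : galg n := \sum_(AB | valid AB) gdelta (piQ AB).

Definition Zs (g : 'S_n) := [set k | g k \in X].
Definition AB0 (g : 'S_n) := (Zs g :&: Q, X :\: Zs g).

Lemma GpE g : Gp g -> forall k, k \notin Y -> g k = k.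
Proof. by move=> /forallP H k kY; apply/eqP; move/implyP: (H k); apply. Qed.

Lemma ZsY g : Gp g -> forall m, (m \in Zs g) ==> ((m \in X) || (m \in Q)).
Proof.
move=> G m; apply/implyP; rewrite inE => gm.
case mY: (m \in Y); first by rewrite -in_setU.
by move: gm; rewrite (GpE G (negbT mY)) => ->.
Qed.

Lemma keyAB AB g : valid AB -> Gp g -> (((piQ AB)^-1 * g)%g \in Hs) = (AB == AB0 g).
Proof.
move=> V G; have /and3P [/subsetP sA /subsetP sB _] := V.
have hE : forall k, ((piQ AB)^-1 * g)%g k = g (piQ AB k) by move=> k; rewrite permM piQ_inv.
rewrite inE /Hpred; apply/forallP/eqP => [H|E].
  have HZ : forall m, (m \in Zs g) = (m \in AB.1) || ((m \in X) && (m \notin AB.2)).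
    move=> m; move: (H (piQ AB m)) => /andP [_ /eqP].
    by rewrite hE piQ_invol // piQ_X // [m \in Zs g]inE => ->.
  case: AB V sA sB HZ {H hE} => A B V sA sB HZ /=.
  congr pair; apply/setP => m.
    rewrite in_setI HZ; case mA: (m \in A); first by rewrite /= (sA _ mA).
    by rewrite /=; case mQ: (m \in Q); rewrite ?andbF // QnX.
  rewrite in_setD HZ; case mB: (m \in B).
    have mX := sB _ mB; case mA: (m \in A).
      by rewrite (@valid_dis (A, B) V m mA) in mB.
    by rewrite mX.
  by rewrite andbT; case: (m \in X); rewrite ?orbT ?andbF.
move=> k; apply/andP; split.
  by apply/implyP => kY; rewrite hE piQ_fix // (GpE G kY).
rewrite hE -{2}(piQ_invol V k) piQ_X //.
have z := ZsY G (piQ AB k); have q := @QnX (piQ AB k).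
move: z q; set m := piQ AB k; rewrite E /= in_setI in_setD [m \in Zs g]inE.
case: (g m \in X); case: (m \in Q); case: (m \in X) => //=.
Qed.

Lemma notG AB g : valid AB -> ~~ Gp g -> ((piQ AB)^-1 * g)%g \notin Hs.
Proof.
move=> V /forallPn [k]; rewrite negb_imply => /andP [kY gk].
rewrite inE /Hpred; apply/forallPn; exists k; rewrite negb_and; apply/orP; left.
by rewrite negb_imply kY permM piQ_inv // piQ_fix.
Qed.

Lemma validA0 g : Gp g -> valid (AB0 g).
Proof.
move=> G; rewrite /valid /AB0 /= subsetIr subsetDl /=.
have cZ : #|Zs g| = #|X| by rewrite -(card_preimset X (@perm_inj _ g)).
have e1 : Zs g :\: X = Zs g :&: Q.
  apply/setP => m; rewrite in_setD in_setI; have := ZsY G m; have := @QnX m.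
  by case: (m \in Zs g); case: (m \in X); case: (m \in Q) => //= /(_ isT).
have := cardsID X (Zs g); have := cardsID (Zs g) X.
rewrite e1 cZ setIC => <-; move/eqP; rewrite eqn_add2l => /eqP ->; done.
Qed.

Lemma coset : gmul (\sum_(h in Hs) gdelta h) D = indG.
Proof.
rewrite gmul_suml; under eq_bigr do rewrite gmul_sumr.
apply/ffunP => g; rewrite sum_ffunE.
under eq_bigr do rewrite sum_ffunE.
rewrite exchange_big /=.
under eq_bigr => AB V.
  under eq_bigr => h _.
    rewrite gmul_delta ffunE.
    have -> : (g == piQ AB * h)%g = ((piQ AB)^-1 * g == h)%g.
      by apply/eqP/eqP => [->|<-]; rewrite ?mulKg ?mulKVg.
    over.
  rewrite /= sum_eq1.
  over.
rewrite ffunE /=; case G: (Gp g).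
  rewrite (bigD1 (AB0 g)) ?validA0 //= keyAB ?validA0 // eqxx big1 ?addr0 // => AB /andP [V ne].
  by rewrite keyAB // (negbTE ne).
by rewrite big1 // => AB V; rewrite (negbTE (notG V (negbT G))).
Qed.

Lemma Hs_row h : h \in Hs -> row_group S h.
Proof.
rewrite inE => /forallP H; apply/forallP => k; have /andP [H1 /eqP H2] := H k.
case kY: (k \in Y); last by rewrite (eqP (implyP H1 (negbT kY))).
case kX: (k \in X).
  have hX : h k \in X by rewrite H2 kX.
  by move: hX kX; rewrite !inE => /eqP -> /eqP ->.
have kQ : k \in Q by move: kY; rewrite in_setU kX.
have hY : h k \in Y.
  case hY: (h k \in Y) => //.
  have := H (h k) => /andP [/implyP /(_ (negbT hY)) /eqP /perm_inj E _].
  by rewrite -E hY in kY.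
have hQ : h k \in Q by move: hY; rewrite in_setU H2 kX.
move/subsetP: HQ => HQ'; move: (HQ' _ kQ) (HQ' _ hQ); rewrite !inE.
by move=> /eqP -> /eqP ->.
Qed.

Lemma aS_H h : h \in Hs -> gmul (aT S) (gdelta h) = aT S.
Proof.
move=> hH; apply/ffunP => p; rewrite gmul_deltar !ffunE; congr ((nat_of_bool _)%:R).
rewrite /row_group.
exact: (@kg_mulE n (fun k => (S k).1) h^-1 p (kgV (Hs_row hH))).
Qed.


Lemma GpM a b : Gp a -> Gp b -> Gp (a * b)%g.
Proof.
move=> Ga Gb; apply/forallP => k; apply/implyP => kY.
by rewrite permM (GpE Ga kY) (GpE Gb kY).
Qed.

Lemma GpV a : Gp a -> Gp a^-1%g.
Proof.
move=> Ga; apply/forallP => k; apply/implyP => kY.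
by rewrite -{1}(GpE Ga kY) permK.
Qed.

Lemma indG_delta t : Gp t -> gmul (gdelta t) indG = indG.
Proof.
move=> Gt; apply/ffunP => p; rewrite gmul_deltal !ffunE.
congr ((nat_of_bool _)%:R); apply/idP/idP => H; last exact: GpM (GpV Gt).
by rewrite -(mulgKV t p); apply: GpM H Gt.
Qed.

Lemma geq_lam : (nth 0%N lam i.+1 <= nth 0%N lam i)%N.
Proof.
case/and3P: Hp => srt _ _.
have tr : transitive geq by move=> a b c /= H1 H2; exact: leq_trans H2 H1.
have := sorted_leq_nth tr (fun a => leqnn a) 0%N srt.
move=> /(_ i i.+1); rewrite !inE => /(_ (ltnW Hi) Hi (leqnSn i)).
done.
Qed.

Lemma galg_oppself (x : galg n) : x = - x -> x = 0.
Proof.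
move=> E; apply/ffunP => p; have := congr1 (fun F : galg n => F p) E.
rewrite /= !ffunE => /eqP.
by rewrite -addr_eq0 -mulr2n mulrn_eq0 /= => /eqP.
Qed.

Lemma term0 r : row_group S r -> gmul (bT S) (gmul (gdelta r) indG) = 0.
Proof.
move=> Rr; have [q0 q0Q] := set0Pn _ HQ0.
set d := r q0.
have rd : (S d).1 = i.+1.
  move/forallP: Rr => /(_ q0) /eqP ->.
  by move/subsetP: HQ => /(_ q0 q0Q); rewrite inE => /eqP.
have shd : ((S d).2 < nth 0%N lam i)%N.
  case: HS => Hsh _; case/andP: (Hsh d) => _; rewrite rd => H.
  exact: leq_trans H geq_lam.
have [c Sc] : exists c, S c = (i, (S d).2).
  apply: (numbering_onto Hp HS); rewrite /in_shape /= shd andbT.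
  exact: ltnW Hi.
have cd : c != d by apply/eqP => E; move: rd; rewrite -E Sc /=; exact: n_Sn.
set tau := tperm c d.
have tcol : [forall k, (fun k => (S k).2) (tau k) == (fun k => (S k).2) k].
  apply/forallP => k /=; rewrite /tau; case: tpermP => [->|->|] //.
    by rewrite Sc.
  by rewrite Sc.
set t' := (r * tau * r^-1)%g.
have Gt' : Gp t'.
  apply/forallP => k; apply/implyP => kY.
  rewrite /t' !permM tpermD ?permK //.
    apply/eqP => E; have : (S (r k)).1 = i by rewrite -E Sc.
    move/forallP: Rr => /(_ k) /eqP -> kX.
    by move: kY; rewrite in_setU inE kX eqxx.
  apply/eqP => /perm_inj E; move: kY; rewrite -E in_setU q0Q orbT.
  done.
have Wt : gmul (gdelta r) indG = gmul (gdelta tau) (gmul (gdelta r) indG).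
  rewrite -{1}(indG_delta Gt') -gmulA gmul_delta -gmulA gmul_delta.
  by rewrite /t' mulgKV.
have bt : gmul (bT S) (gdelta tau) = - bT S.
  apply/ffunP => p; rewrite gmul_deltar tpermV [RHS]ffunE !ffunE.
  have -> : col_group S (tau * p)%g = col_group S p.
    exact: (@kg_mulE n (fun k => (S k).2) tau p tcol).
  rewrite odd_permM odd_tperm cd /=.
  by case: (col_group S p); case: (odd_perm p); rewrite ?expr0 ?expr1 ?opprK ?oppr0.
have E : gmul (bT S) (gmul (gdelta r) indG) = - gmul (bT S) (gmul (gdelta r) indG).
  by rewrite {1}Wt -gmulA bt gmulNl.
exact: galg_oppself E.
Qed.

Lemma aT_sum : aT S = \sum_(r | row_group S r) gdelta r.
Proof.
apply/ffunP => p; rewrite sum_ffunE ffunE.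
under eq_bigr do rewrite ffunE.
by rewrite sum_eq1.
Qed.

Lemma final_S : gmul (bT S) (gmul (aT S) D) = 0.
Proof.
have E1 : gmul (aT S) indG = gmul (aT S) D *+ #|Hs|.
  rewrite -coset -gmulA gmul_sumr.
  under eq_bigr => h hH do rewrite aS_H //.
  by rewrite sumr_const gmulMnl.
have E2 : gmul (bT S) (gmul (aT S) indG) = 0.
  rewrite aT_sum gmul_suml gmul_sumr big1 // => r Rr; exact: term0.
rewrite E1 gmulMnr in E2.
have H1 : (1%g : 'S_n) \in Hs.
  by rewrite inE /Hpred; apply/forallP => k; rewrite !perm1 !eqxx implybT.
apply/ffunP => p; have := congr1 (fun F : galg n => F p) E2.
rewrite /= ffunMnE [in RHS]ffunE => /eqP; rewrite mulrn_eq0 => /orP [|/eqP ->].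
  by rewrite (cardD1 1%g) H1.
by rewrite ffunE.
Qed.

End Gar.

Unset Implicit Arguments.


Theorem lemma2p14 (n : nat) (lam : seq nat) (S T : 'I_n -> nat * nat)
    (i : nat) (Q : {set 'I_n}) :
  is_partition n lam -> numbering lam S -> numbering lam T ->
  (i.+1 < size lam)%N ->
  Q != set0 -> Q \subset row_entries S i.+1 ->
  (exists x : galg n, gammaQ T S i Q = gmul (aT T) x) /\
  gmul (bT T) (gammaQ T S i Q) = 0.
Proof.
move=> Hp HS HT Hi HQ0 HQ.
have spec0 := sigma_spec Hp HT (proj1 HS) (proj2 HS).
have specU : forall AB, valid S i Q AB -> forall k,
    T (sigmaTS (xi_move S AB.1 AB.2) T k) = S (piQ S AB k).
  move=> AB V k; rewrite (sigma_spec Hp HT) ?xi_moveE ?(piQE HQ V) //.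
    by move=> m; rewrite xi_moveE; apply: (proj1 HS).
  move=> a b; rewrite !xi_moveE -!(piQE HQ V) => /(proj2 HS).
  exact: perm_inj.
have conjU : forall AB, valid S i Q AB ->
    gmul (gdelta (sigmaTS (xi_move S AB.1 AB.2) T)) (aT (xi_move S AB.1 AB.2))
    = gmul (aT T) (gdelta (sigmaTS (xi_move S AB.1 AB.2) T)).
  move=> AB V; apply: gmul_conj; apply: aT_conj => k.
  by rewrite specU // xi_moveE (piQE HQ V).
have sigU : forall AB, valid S i Q AB ->
    sigmaTS (xi_move S AB.1 AB.2) T = (piQ S AB * sigmaTS S T)%g.
  move=> AB V; apply/permP => k; apply: (proj2 HT).
  by rewrite permM specU // spec0.
have Egam : gammaQ T S i Q = gmul (aT T) (gmul (gdelta (sigmaTS S T)) (D S i Q)).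
  rewrite /gammaQ /D !gmul_sumr; apply: eq_bigr => AB V.
  by rewrite conjU // sigU // gmul_delta.
split; first by eexists; exact: Egam.
have cA : gmul (gdelta (sigmaTS S T)) (aT S) = gmul (aT T) (gdelta (sigmaTS S T)).
  by apply: gmul_conj; apply: aT_conj => k; rewrite spec0.
have cB : gmul (gdelta (sigmaTS S T)) (bT S) = gmul (bT T) (gdelta (sigmaTS S T)).
  by apply: gmul_conj; apply: bT_conj => k; rewrite spec0.
rewrite Egam -(gmulA (aT T)) -cA gmulA -(gmulA (bT T)) -cB gmulA.
by rewrite (final_S Hp HS Hi HQ0 HQ) gmulr0.
Qed.
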